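(* Let $K_n$ be the complete graph on $n$ vertices and let $S\subseteq V(K_n)$ with $|S|=s\geq 2$. Then $K_n$ contains $n-\lceil s/2\rceil$ pairwise completely independent $S$-Steiner trees.
   Context: For $S\subseteq V(G)$ with $|S|\ge 2$, an $S$-Steiner tree of $G$ is a subtree $T$ of $G$ with $S\subseteq V(T)$ all of whose leaves belong to $S$. A family of $S$-Steiner trees $T_1,\dots,T_k$ is completely independent if for all $1\le p<q\le k$: $E(T_p)\cap E(T_q)=\emptyset$, $V(T_p)\cap V(T_q)=S$, and for any two vertices $x_1,x_2\in S$ the $(x_1,x_2)$-paths in $T_p$ and in $T_q$ are internally disjoint. *)

(* Defs.v *)
From mathcomp Require Import all_boot.
Set Implicit Arguments. Unset Strict Implicit. Unset Printing Implicit Defensive.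

Section Steiner.
Variable V : finType.

Definition simple_graph (G : rel V) := irreflexive G /\ symmetric G.

(* A subgraph is described by a vertex set VT and a set ET of unordered
   edges, each edge being a 2-element set of vertices. *)
Record subgraph := Subgraph { sgV : {set V}; sgE : {set {set V}} }.

Definition is_subgraph_of (G : rel V) (T : subgraph) :=
  forall e, e \in sgE T ->
    exists x y, [/\ e = [set x; y], x != y, G x y, x \in sgV T & y \in sgV T].

Definition adjT (T : subgraph) : rel V := fun a b => [set a; b] \in sgE T.

Definition is_path (T : subgraph) (x y : V) (p : seq V) :=
  [/\ x \in sgV T, path (adjT T) x p, last x p = y & uniq (x :: p)].

Definition connected_sg (T : subgraph) :=
  forall x y, x \in sgV T -> y \in sgV T -> exists p, is_path T x y p.

(* A cycle: pairwise distinct vertices x :: p with |x :: p| >= 3,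
   consecutive vertices adjacent and the last adjacent to x. *)
Definition acyclic_sg (T : subgraph) :=
  forall x p, 2 <= size p -> uniq (x :: p) -> path (adjT T) x p ->
    ~~ adjT T (last x p) x.

Definition is_tree (G : rel V) (T : subgraph) :=
  [/\ is_subgraph_of G T, sgV T != set0, connected_sg T & acyclic_sg T].

Definition degT (T : subgraph) (v : V) := #|[set e in sgE T | v \in e]|.

Definition is_leaf (T : subgraph) (v : V) := (v \in sgV T) && (degT T v == 1).

Definition steiner_tree (G : rel V) (S : {set V}) (T : subgraph) :=
  [/\ is_tree G T, S \subset sgV T & forall v, is_leaf T v -> v \in S].

Definition internal (x y : V) (p : seq V) : {set V} :=
  [set v in x :: p | (v != x) && (v != y)].

Definition completely_independent_pair (S : {set V}) (T1 T2 : subgraph) :=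
  [/\ [disjoint sgE T1 & sgE T2],
      sgV T1 :&: sgV T2 = S &
      forall x1 x2 p q, x1 \in S -> x2 \in S ->
        is_path T1 x1 x2 p -> is_path T2 x1 x2 q ->
        [disjoint internal x1 x2 p & internal x1 x2 q]].

Definition ci_steiner_family (G : rel V) (S : {set V}) (k : nat)
  (F : 'I_k -> subgraph) :=
  (forall i, steiner_tree G S (F i)) /\
  (forall i j, i != j -> completely_independent_pair S (F i) (F j)).

End Steiner.

Definition complete_graph (n : nat) : rel 'I_n := fun x y => x != y.
Arguments complete_graph n : clear implicits.

(* Main.v *)
Require Import Defs.
From mathcomp Require Import all_boot zify.
Set Implicit Arguments. Unset Strict Implicit. Unset Printing Implicit Defensive.

Section Gen.
Variable V : finType.

Definition mkT (VT : {set V}) (E : rel V) : subgraph V :=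
  Subgraph VT [set e : {set V} | [exists x, exists y, (e == [set x; y]) && E x y]].

Lemma set2_eq (a b c d : V) : [set a; b] = [set c; d] ->
  (a = c /\ b = d) \/ (a = d /\ b = c).
Proof.
move=> H.
have ha : a \in [set c; d] by rewrite -H set21.
have hb : b \in [set c; d] by rewrite -H set22.
have hc : c \in [set a; b] by rewrite H set21.
have hd : d \in [set a; b] by rewrite H set22.
move: ha hb hc hd; rewrite !inE.
by case/orP=> /eqP ea; case/orP=> /eqP eb; case/orP=> /eqP ec; case/orP=> /eqP ed;
  subst; auto.
Qed.

Variables (VT : {set V}) (E : rel V).
Hypothesis Esym : symmetric E.
Hypothesis Eirr : forall x y, E x y -> x != y.
Hypothesis EV : forall x y, E x y -> x \in VT.

Lemma adjT_mkT a b : adjT (mkT VT E) a b = E a b.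
Proof.
rewrite /adjT inE; apply/existsP/idP.
  case=> x /existsP [y /andP [/eqP h hE]].
  by case: (set2_eq h) => [[-> ->]|[-> ->]] //; rewrite Esym.
by move=> h; exists a; apply/existsP; exists b; rewrite eqxx h.
Qed.

Lemma EV2 x y : E x y -> y \in VT.
Proof. by rewrite Esym; apply: EV. Qed.

Lemma subgraph_mkT (G : rel V) : (forall x y, E x y -> G x y) ->
  is_subgraph_of G (mkT VT E).
Proof.
move=> HG e; rewrite inE => /existsP [x /existsP [y /andP [/eqP -> hE]]].
exists x, y; split => //; [exact: Eirr | exact: HG | exact: EV hE | exact: EV2 hE].
Qed.

Variable Inn : {set V}.
Hypothesis Hone : forall v u z, v \notin Inn -> E v u -> E v z -> u = z.

Lemma two_nbrs u v z : E u v -> E v z -> u != z -> v \in Inn.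
Proof.
move=> h1 h2 hn; apply/negPn/negP => hv.
by move/eqP: hn; apply; apply: (Hone hv); rewrite // Esym.
Qed.

Hypothesis Hthree : forall x y z, x \in VT -> y \in VT -> z \in VT ->
  x \in Inn -> y \in Inn -> z \in Inn -> x != y -> y != z -> x != z -> False.

Lemma acyclic_mkT : acyclic_sg (mkT VT E).
Proof.
move=> x p hs hu; rewrite /acyclic_sg.
case: p hs hu => [|y [|z r]] // _ hu.
rewrite /= !adjT_mkT => /and3P [hxy hyz hr]; apply/negP => hl.
have xy : x != y by apply: Eirr.
move: hu; rewrite /= !inE !negb_or => /and4P [/and3P [_ hxz hxr] /andP [hyz' hyr] hzr _].
have Ix : x \in Inn.
  apply: (@two_nbrs (last z r) x y); first by [].
    by [].
  have : last z r \in z :: r by rewrite mem_last.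
  rewrite inE; case/orP => [/eqP -> | hlr]; first by rewrite eq_sym.
  by apply/eqP => he; move: hyr; rewrite -he hlr.
have Iy : y \in Inn by apply: (@two_nbrs x y z).
have Iz : z \in Inn.
  case: r hr hl hxr hyr hzr {Ix Iy} => [|w r] /= hr hl hxr hyr hzr.
    by apply: (@two_nbrs y z x) => //; rewrite eq_sym.
  move/andP: hr => [hzw _]; rewrite adjT_mkT in hzw.
  apply: (@two_nbrs y z w) => //.
  by move: hyr; rewrite inE negb_or => /andP [].
apply: (Hthree (EV hxy) (EV hyz) (EV2 hyz) Ix Iy Iz) => //.
Qed.

Lemma internal_Inn x y p : path (adjT (mkT VT E)) x p -> last x p = y ->
  uniq (x :: p) -> internal x y p \subset Inn.
Proof.
move=> hp hl hu; apply/subsetP => v; rewrite inE => /andP [hv /andP [hvx hvy]].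
have hvp : v \in p by move: hv; rewrite inE (negbTE hvx).
move: hp hl hu; clear hv; case/splitPr: p / hvp => p1 p2.
rewrite cat_path last_cat /= => /and3P [_ h1 h2] hl hu.
case: p2 h2 hl hu => [|z p2] /= h2 hl hu.
  by move: hvy; rewrite -hl eqxx.
move/andP: h2 => [h2 _]; rewrite adjT_mkT in h1; rewrite adjT_mkT in h2.
apply: (@two_nbrs (last x p1) v z) => //.
apply/eqP => he.
have hu2 : uniq ((x :: p1) ++ (v :: z :: p2)) by []; move: hu2; rewrite cat_uniq => /and3P [_ hh _].
move: hh; apply/negP; rewrite negbK; apply/hasP; exists z; first by rewrite !inE eqxx orbT.
by rewrite -he mem_last.
Qed.

Variable c : V.
Hypothesis cV : c \in VT.
Hypothesis Hconn : forall v, v \in VT -> connect E c v.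

Lemma connected_mkT : connected_sg (mkT VT E).
Proof.
move=> x y hx hy.
have hc : connect E x y.
  apply: (connect_trans (y := c)); last exact: Hconn.
  by rewrite (sym_connect_sym Esym); apply: Hconn.
case/connectP: hc => p hp ->.
have hp' : path (adjT (mkT VT E)) x p.
  by rewrite (eq_path (e' := E)) // => a b; rewrite adjT_mkT.
case: (shortenP hp') => p' hp'' hu _.
by exists p'; split.
Qed.

Lemma tree_mkT (G : rel V) : (forall x y, E x y -> G x y) -> is_tree G (mkT VT E).
Proof.
move=> HG; split; [exact: subgraph_mkT | | exact: connected_mkT | exact: acyclic_mkT].
by apply/set0Pn; exists c.
Qed.

End Gen.

Section Pair.
Variable V : finType.
Variables (S VT1 VT2 Inn1 Inn2 : {set V}) (E1 E2 : rel V).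
Hypotheses (E1sym : symmetric E1) (E2sym : symmetric E2).
Hypothesis Hone1 : forall v u z, v \notin Inn1 -> E1 v u -> E1 v z -> u = z.
Hypothesis Hone2 : forall v u z, v \notin Inn2 -> E2 v u -> E2 v z -> u = z.
Hypothesis Hdisj : forall x y, E1 x y -> E2 x y -> False.
Hypothesis HV : VT1 :&: VT2 = S.
Hypothesis HInn : [disjoint Inn1 & Inn2].

Lemma ci_pair_mkT : completely_independent_pair S (mkT VT1 E1) (mkT VT2 E2).
Proof.
split => //.
  apply/pred0P => e /=; apply/negP => /andP [].
  rewrite !inE => /existsP [x /existsP [y /andP [/eqP -> h1]]].
  move=> /existsP [x' /existsP [y' /andP [/eqP h h2]]].
  case: (set2_eq h) => [[e1 e2]|[e1 e2]]; subst; first exact: Hdisj h1 h2.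
  by rewrite E2sym in h2; apply: Hdisj h1 h2.
move=> x1 x2 p q _ _ [_ hp hlp hup] [_ hq hlq huq].
have s1 := internal_Inn E1sym Hone1 hp hlp hup.
have s2 := internal_Inn E2sym Hone2 hq hlq huq.
exact: disjointW s1 s2 HInn.
Qed.
End Pair.

Section Conc.
Variable n : nat.
Variable S : {set 'I_n}.
Variable x0 : 'I_n.

Definition es := enum S.
Definition idx (v : 'I_n) := index v es.
Definition pr v := (idx v)./2.
Definition sd v := odd (idx v).

Lemma size_es : size es = #|S|.
Proof. by rewrite /es cardE. Qed.

Lemma idx_inj x y : x \in S -> y \in S -> pr x = pr y -> sd x = sd y -> x = y.
Proof.
move=> hx hy hp hs.
have : idx x = idx y by rewrite -(odd_double_half (idx x)) -(odd_double_half (idx y)) -/(pr x) -/(pr y) -/(sd x) -/(sd y) hp hs.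
rewrite /idx => he.
by rewrite -(nth_index x0 (s := es) (x := x)) ?mem_enum // he nth_index // mem_enum.
Qed.

Lemma nth_S k : k < #|S| -> nth x0 es k \in S /\ idx (nth x0 es k) = k.
Proof.
move=> hk; split; first by rewrite -(mem_enum (mem S)) -/es mem_nth // size_es.
by rewrite /idx index_uniq // ?size_es // /es enum_uniq.
Qed.

Definition Es (w : 'I_n) : rel 'I_n :=
  fun x y => ((x == w) && (y \in S)) || ((y == w) && (x \in S)).

Definition Fp (i : nat) (x y : 'I_n) :=
  ((pr x == i) && (pr y == i)) ||
  ((pr x != i) && (pr y == i) && (sd y == sd x (+) (pr x < i))) ||
  ((pr y != i) && (pr x == i) && (sd x == sd y (+) (pr y < i))).

Definition Ep (i : nat) : rel 'I_n :=
  fun x y => [&& x \in S, y \in S, x != y & Fp i x y].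

Lemma Es_sym w : symmetric (Es w).
Proof. by move=> x y; rewrite /Es orbC. Qed.

Lemma Ep_sym i : symmetric (Ep i).
Proof.
move=> x y; rewrite /Ep /Fp eq_sym.
by case: (pr x == i); case: (pr y == i); case: (x \in S); case: (y \in S); rewrite /= ?andbF ?orbF.
Qed.


Definition star w := mkT (w |: S) (Es w).
Definition ptree i := mkT S (Ep i).

Section Star.
Variable w : 'I_n.
Hypothesis wS : w \notin S.

Lemma Es_irr x y : Es w x y -> x != y.
Proof.
rewrite /Es => /orP [] /andP [/eqP -> h]; apply/eqP => e; move: wS.
  by rewrite e h.
by rewrite -e h.
Qed.

Lemma Es_V x y : Es w x y -> x \in w |: S.
Proof. by rewrite /Es !inE => /orP [] /andP [h1 h2]; rewrite ?h1 ?h2 ?orbT. Qed.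

Lemma Es_one v u z : v \notin [set w] -> Es w v u -> Es w v z -> u = z.
Proof.
rewrite inE /Es => /negbTE hv; rewrite hv /= => /andP [/eqP -> _] /andP [/eqP -> _] //.
Qed.

Lemma Es_three x y z : x \in w |: S -> y \in w |: S -> z \in w |: S ->
  x \in [set w] -> y \in [set w] -> z \in [set w] -> x != y -> y != z -> x != z -> False.
Proof. by move=> _ _ _; rewrite !inE => /eqP -> /eqP -> _; rewrite eqxx. Qed.

Lemma Es_conn v : v \in w |: S -> connect (Es w) w v.
Proof.
rewrite !inE => /orP [/eqP -> | hv]; first exact: connect0.
by apply: connect1; rewrite /Es eqxx hv.
Qed.

Lemma star_steiner : 2 <= #|S| -> steiner_tree (complete_graph n) S (star w).
Proof.
move=> h2; split.
- apply: (@tree_mkT _ _ _ (@Es_sym w) Es_irr Es_V [set w] Es_one Es_three w).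
  + by rewrite setU11.
  + exact: Es_conn.
  + move=> x y; exact: Es_irr.
- by rewrite /star /= subsetUr.
- move=> v; rewrite /is_leaf /= in_setU1 => /andP [/orP [/eqP ev | //] hd].
  exfalso; move: hd; rewrite ev {v ev}.
  case/card_gt1P: h2 => u1 [u2 [h1 h2 hne]].
  suff : 2 <= degT (star w) w by case: (degT _ _) => [|[|]].
  have -> : 2 = #|[set [set w; u1]; [set w; u2]]|.
    rewrite cards2; case: eqP => // /set2_eq [[_ e]|[e _]]; first by rewrite e eqxx in hne.
    by move: wS; rewrite e h2.
  apply: subset_leq_card; apply/subsetP => e; rewrite !inE => /orP [] /eqP ->;
    rewrite set21 andbT; apply/existsP; exists w; apply/existsP.
    by exists u1; rewrite eqxx /Es eqxx h1.
  by exists u2; rewrite eqxx /Es eqxx h2.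
Qed.
End Star.

Section PairT.
Variable i : nat.
Hypothesis hi : i < #|S|./2.

Definition hub (b : bool) := nth x0 es (b + i.*2).

Lemma hub_lt (b : bool) : b + i.*2 < #|S|.
Proof. move: (odd_double_half #|S|) hi; rewrite -!muln2; set h := _./2; set o := odd _; case: b => /=; lia. Qed.

Lemma hub_S b : hub b \in S.
Proof. by case: (nth_S (hub_lt b)). Qed.

Lemma hub_pr b : pr (hub b) = i.
Proof. by rewrite /pr /hub (nth_S (hub_lt b)).2 half_bit_double. Qed.

Lemma hub_sd b : sd (hub b) = b.
Proof. by rewrite /sd /hub (nth_S (hub_lt b)).2 oddD odd_double addbF; case: b. Qed.

Definition InnP := [set v in S | pr v == i].

Lemma Ep_irr x y : Ep i x y -> x != y.
Proof. by case/and4P. Qed.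

Lemma Ep_V x y : Ep i x y -> x \in S.
Proof. by case/and4P. Qed.

Lemma Ep_one v u z : v \notin InnP -> Ep i v u -> Ep i v z -> u = z.
Proof.
move=> hv /and4P [vS uS _ f1] /and4P [_ zS _ f2].
have pv : pr v != i by move: hv; rewrite inE vS.
move: f1 f2; rewrite /Fp (negbTE pv) /= !andbF !orbF => /andP [/eqP pu /eqP su] /andP [/eqP pz /eqP sz].
by apply: idx_inj => //; congruence.
Qed.

Lemma Ep_three x y z : x \in S -> y \in S -> z \in S ->
  x \in InnP -> y \in InnP -> z \in InnP -> x != y -> y != z -> x != z -> False.
Proof.
move=> _ _ _; rewrite !inE => /andP [xS /eqP px] /andP [yS /eqP py] /andP [zS /eqP pz].
have E a b : a \in S -> b \in S -> pr a = i -> pr b = i -> sd a = sd b -> a = b.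
  by move=> ha hb pa pb; apply: idx_inj; rewrite // pa pb.
move=> nxy nyz nxz.
have : sd x = sd y \/ sd y = sd z \/ sd x = sd z.
  by case: (sd x); case: (sd y); case: (sd z); auto.
case=> [h|[h|h]].
- by move: nxy; rewrite (E x y) ?eqxx.
- by move: nyz; rewrite (E y z) ?eqxx.
- by move: nxz; rewrite (E x z) ?eqxx.
Qed.

Lemma hub_conn b : connect (Ep i) (hub false) (hub b).
Proof.
case: b; last exact: connect0.
apply: connect1; rewrite /Ep !hub_S /Fp !hub_pr eqxx /=.
rewrite andbT; apply/eqP => e; have := hub_sd true; by rewrite -e hub_sd.
Qed.

Lemma Ep_conn v : v \in S -> connect (Ep i) (hub false) v.
Proof.
move=> vS; case: (eqVneq (pr v) i) => pv.
  by rewrite -(@idx_inj (hub (sd v)) v) ?hub_S ?hub_pr ?hub_sd //; apply: hub_conn.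
apply: (connect_trans (hub_conn (sd v (+) (pr v < i)))); apply: connect1.
rewrite /Ep hub_S vS /Fp hub_pr hub_sd eqxx pv /= eqxx !orbT andbT.
by apply/eqP => e; move: pv; rewrite -e hub_pr eqxx.
Qed.

Lemma ptree_steiner : steiner_tree (complete_graph n) S (ptree i).
Proof.
split.
- apply: (@tree_mkT _ _ _ (@Ep_sym i) Ep_irr Ep_V InnP Ep_one Ep_three (hub false)).
  + exact: hub_S.
  + exact: Ep_conn.
  + move=> x y; exact: Ep_irr.
- by [].
- by move=> v /andP [].
Qed.
End PairT.


Ltac neqs := repeat match goal with H : is_true (?a != ?b) |- _ =>
  let h := fresh in have h := H; rewrite eq_sym in h;
  rewrite ?(negbTE H) ?(negbTE h); clear H h end.

Lemma Fp_disj i j px py (bx by' : bool) : i != j ->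
  (((px == i) && (py == i)) ||
  ((px != i) && (py == i) && (by' == bx (+) (px < i))) ||
  ((py != i) && (px == i) && (bx == by' (+) (py < i)))) ->
  (((px == j) && (py == j)) ||
  ((px != j) && (py == j) && (by' == bx (+) (px < j))) ||
  ((py != j) && (px == j) && (bx == by' (+) (py < j)))) -> False.
Proof.
move=> nij.
wlog hij : i j nij / i < j.
  move=> W; case: (ltngtP i j) => [h|h|e]; last by rewrite e eqxx in nij.
    exact: W.
  by move=> h1 h2; apply: (W j i) => //; rewrite eq_sym.
have hji : (j < i) = false by apply/negbTE; rewrite -leqNgt ltnW.
have nji : (j == i) = false by apply/negbTE; rewrite eq_sym.
move/negbTE: nij => nij.
have ltii : (i < i) = false by rewrite ltnn.
have ltjj : (j < j) = false by rewrite ltnn.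
case: (eqVneq px i) => [?|?]; case: (eqVneq py i) => [?|?];
case: (eqVneq px j) => [?|?]; case: (eqVneq py j) => [?|?]; subst;
rewrite ?eqxx ?ltnn //= in nij hji nji *; neqs;
rewrite ?eqxx ?nij ?nji ?hij ?hji ?ltii ?ltjj /= ?andbF ?orbF //;
case: bx; case: by' => //=.
Qed.

Lemma Ep_disj i j x y : i != j -> Ep i x y -> Ep j x y -> False.
Proof. by move=> nij /and4P [_ _ _ f1] /and4P [_ _ _ f2]; apply: (Fp_disj nij f1 f2). Qed.

Lemma Es_Ep w i x y : w \notin S -> Es w x y -> Ep i x y -> False.
Proof.
move=> wS; rewrite /Es => /orP [] /andP [/eqP e _] /and4P [h1 h2 _ _]; subst.
  by rewrite h1 in wS.
by rewrite h2 in wS.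
Qed.

Lemma Ep_Es w i x y : w \notin S -> Ep i x y -> Es w x y -> False.
Proof. by move=> wS h1 h2; apply: (Es_Ep wS h2 h1). Qed.

Lemma Es_Es w w' x y : w != w' -> w \notin S -> w' \notin S -> Es w x y -> Es w' x y -> False.
Proof.
rewrite /Es => nw wS w'S /orP [] /andP [/eqP e1 h1] /orP [] /andP [/eqP e2 h2]; subst;
  by rewrite ?eqxx ?h1 ?h2 in nw wS w'S.
Qed.

Lemma ci_pp i j : i != j -> completely_independent_pair S (ptree i) (ptree j).
Proof.
move=> nij; apply: ci_pair_mkT.
- exact: Ep_sym.
- exact: Ep_sym.
- exact: Ep_one.
- exact: Ep_one.
- by move=> x y; apply: Ep_disj.
- exact: setIid.
- apply/pred0P => v /=; rewrite !inE; apply/negP => /andP [/andP [_ /eqP e1] /andP [_ /eqP e2]].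
  by rewrite -e1 e2 eqxx in nij.
Qed.

Lemma ci_ss w w' : w != w' -> w \notin S -> w' \notin S ->
  completely_independent_pair S (star w) (star w').
Proof.
move=> nw wS w'S; apply: ci_pair_mkT.
- exact: Es_sym.
- exact: Es_sym.
- exact: Es_one.
- exact: Es_one.
- by move=> x y; apply: Es_Es.
- apply/setP => v; rewrite in_setI !in_setU1; case: (eqVneq v w) => [-> | a] /=.
    by rewrite (negbTE wS) (negbTE nw).
  by case: (eqVneq v w') => [-> | b] /=; rewrite ?andbb // (negbTE w'S).
- by rewrite disjoints1 in_set1.
Qed.

Lemma ci_sp w i : w \notin S -> completely_independent_pair S (star w) (ptree i).
Proof.
move=> wS; apply: ci_pair_mkT.
- exact: Es_sym.
- exact: Ep_sym.
- exact: Es_one.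
- exact: Ep_one.
- by move=> x y; apply: Es_Ep.
- apply/setP => v; rewrite in_setI in_setU1; case: (eqVneq v w) => [->|] //=.
  by rewrite andbb.
- by rewrite disjoints1 inE (negbTE wS).
Qed.

Lemma ci_ps w i : w \notin S -> completely_independent_pair S (ptree i) (star w).
Proof.
move=> wS; apply: ci_pair_mkT.
- exact: Ep_sym.
- exact: Es_sym.
- exact: Ep_one.
- exact: Es_one.
- by move=> x y; apply: Ep_Es.
- apply/setP => v; rewrite in_setI in_setU1; case: (eqVneq v w) => [->|] //=.
    by rewrite (negbTE wS).
  by rewrite andbb.
- by rewrite disjoint_sym disjoints1 inE (negbTE wS).
Qed.

End Conc.

Theorem theorem2p6 (n : nat) (S : {set 'I_n}) :
  2 <= #|S| ->
  exists F : 'I_(n - uphalf #|S|) -> subgraph 'I_n,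
    ci_steiner_family (complete_graph n) S F.
Proof.
move=> hs.
have [x0 _] : exists x, x \in S.
  by apply/set0Pn; rewrite -card_gt0; apply: leq_trans hs.
pose N := #|~: S|.
pose ws := enum (~: S).
have szws : size ws = N by rewrite /ws /N cardE.
pose w (j : nat) := nth x0 ws j.
have wS j : j < N -> w j \notin S.
  move=> hj; have : w j \in ~: S.
    by rewrite -(mem_enum (mem (~: S))) mem_nth // szws.
  by rewrite inE.
have hN : #|S| + N = n by rewrite /N cardsC card_ord.
have hb (j : 'I_(n - uphalf #|S|)) : ~~ (j < N) -> j - N < #|S|./2.
  move=> hj; have := ltn_ord j; move: (nat_of_ord j) hj hN (odd_double_half #|S|) => jj.
  rewrite uphalf_half -!muln2; set h := _./2; set o := odd _; lia.
pose F (j : 'I_(n - uphalf #|S|)) :=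
  if j < N then star S (w j) else ptree S (j - N).
exists F; split.
  move=> j; rewrite /F; case: ifP => hj.
    by apply: star_steiner => //; apply: wS.
  by apply: (@ptree_steiner _ _ x0); apply: hb; rewrite hj.
move=> j k njk; rewrite /F.
have njk' : (j : nat) != k by [].
case: ifP => hj; case: ifP => hk.
- apply: ci_ss; try exact: x0; rewrite ?wS //.
  by rewrite /w nth_uniq ?szws // /ws enum_uniq.
- by apply: ci_sp; try exact: x0; apply: wS.
- by apply: ci_ps; try exact: x0; apply: wS.
- apply: ci_pp; try exact: x0; apply/eqP => e; move/eqP: njk'; apply.
  move: hj hk => /negbT hj /negbT hk; lia.
Qed.
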